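(* Let $\mathcal{G}$ be an infinite connected graph with finite maximum degree $d_{\max}$, and let $H$ be its Hashimoto (non-backtracking) matrix, with $\rho\equiv\rho_{l^2}(H)$. Consider site percolation on $\mathcal{G}$ with open-vertex probability $p$. If $p<1/\rho$, then there exist a base $\rho'<1$ and a constant $C\ge d_{\max}(1-p\rho)^{-1}$ such that for every pair of vertices $u,v$ of $\mathcal{G}$, $$\tau_{u,v}\le C\,(\rho')^{d(u,v)},$$ where $d(u,v)$ is the graph distance.
   Context: For a graph $\mathcal{G}$ with vertex set $\mathcal{V}$ and edge set $\mathcal{E}$, let $\mathcal{A}(\mathcal{G})$ be the set of arcs (directed edges; each undirected edge gives two mutually reverse arcs). The Hashimoto matrix $H$ is indexed by $\mathcal{A}\times\mathcal{A}$, with $H_{a,b}=1$ iff the head of $a$ coincides with the tail of $b$ and $b$ is not the reverse of $a$, and $H_{a,b}=0$ otherwise (it is the adjacency matrix of the oriented line graph of $\mathcal{G}$). $\rho_{l^2}(H)$ denotes the spectral radius of $H$ viewed as an operator on $l^2(\mathcal{A})$, i.e. $\rho_{l^2}(H)=\lim_{m\to\infty}\|H^m\|_2^{1/m}$. In site percolation each vertex is independently open with probability $p$; $\mathcal{C}(v)$ is the connected component containing $v$ of the subgraph induced by open vertices ($\mathcal{C}(v)=\emptyset$ if $v$ is closed). The connectivity is $\tau_{u,v}=\mathbb{P}(u\in\mathcal{C}(v))$. *)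

(* Defs.v *)
From HB Require Import structures.
From mathcomp Require Import all_boot all_order all_algebra.
From mathcomp Require Import all_classical all_reals all_analysis.
Set Implicit Arguments. Unset Strict Implicit. Unset Printing Implicit Defensive.
Import Order.TTheory GRing.Theory Num.Theory.
Local Open Scope classical_set_scope.
Local Open Scope ring_scope.

Section Graph.
Variable V : choiceType.
(* A locally finite simple graph is given by its neighbour lists. *)
Variable nb : V -> seq V.

Definition simple_graph : Prop :=
  (forall x, uniq (nb x)) /\ (forall x, x \notin nb x) /\
  (forall x y, (y \in nb x) = (x \in nb y)).

Definition adj (x y : V) : bool := y \in nb x.

Definition infinite_graph : Prop := forall s : seq V, exists x, x \notin s.

(* walk from u of length (size s) ending at v *)
Definition walk (u v : V) (s : seq V) : Prop := path adj u s /\ last u s = v.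

Definition connected_graph : Prop := forall u v, exists s, walk u v s.

Definition is_dist (u v : V) (n : nat) : Prop :=
  (exists s, walk u v s /\ size s = n) /\
  (forall s, walk u v s -> (n <= size s)%N).

Definition max_degree (dmax : nat) : Prop :=
  (forall x, (size (nb x) <= dmax)%N) /\ exists x, size (nb x) = dmax.

(* arcs = ordered pairs (tail, head) of adjacent vertices *)
Definition is_arc (a : V * V) : bool := adj a.1 a.2.

Variable R : realType.

Definition hashimoto (a b : V * V) : R :=
  ((is_arc a && is_arc b && (a.2 == b.1) && (b != (a.2, a.1))%B)%:R).

(* entries of H^m: (H^(m+1))_{a,b} = sum_c H_{a,c} (H^m)_{c,b}, where the
   sum ranges over the (finitely many) arcs c that can follow a, i.e. the
   arcs out of the head of a; H_{a,c} = 0 for every other c. *)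
Fixpoint hashimoto_pow (m : nat) (a b : V * V) : R :=
  match m with
  | 0 => (is_arc a && (a == b))%:R
  | m'.+1 => \sum_(c <- [seq (a.2, z) | z <- nb a.2])
               hashimoto a c * hashimoto_pow m' c b
  end.

Definition arc_seq (s : seq (V * V)) : bool := uniq s && all is_arc s.

Definition l2sq (g : V * V -> R) : R :=
  sup [set \sum_(a <- t) g a ^+ 2 | t in [set t | arc_seq t]].

Definition hpow_apply (m : nat) (s : seq (V * V)) (f : V * V -> R) :=
  fun a => \sum_(b <- s) hashimoto_pow m a b * f b.

(* operator norm of H^m on l^2(A), computed on the dense subspace of
   finitely supported vectors *)
Definition hpow_norm (m : nat) : R :=
  sup [set r : R | exists (s : seq (V * V)) (f : V * V -> R),
         [/\ arc_seq s, \sum_(b <- s) f b ^+ 2 <= 1 &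
             r = Num.sqrt (l2sq (hpow_apply m s f))]].

Definition hashimoto_rho : R :=
  limn (fun m : nat => hpow_norm m `^ (m%:R)^-1).

End Graph.

Section Percolation.
Local Open Scope ereal_scope.
Variables (V : choiceType) (R : realType) (d : measure_display)
  (Omega : measurableType d).

(* omega x w = true iff vertex x is open in configuration w;
   site percolation with parameter p: the events {x open} are measurable
   and the family (omega x)_x is i.i.d. Bernoulli(p), i.e. the product rule
   holds for every finite set of vertices. *)
Definition site_percolation (P : probability Omega R) (omega : V -> Omega -> bool)
  (p : R) : Prop :=
  (forall x, measurable [set w | omega x w]) /\
  (forall (s : seq V) (b : V -> bool), uniq s ->
     P [set w | all (fun x => omega x w == b x) s] =
     (\prod_(x <- s) (if b x then p else 1 - p)%R)%:E).

(* the event {u in C(v)}: an open walk from v to u (u, v themselves open) *)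
Definition in_cluster (nb : V -> seq V) (omega : V -> Omega -> bool)
  (u v : V) : set Omega :=
  [set w | exists s, walk nb v u s /\ all (fun x => omega x w) (v :: s)].

End Percolation.

(* Main.v *)
Require Import Defs.
From HB Require Import structures.
From mathcomp Require Import all_boot all_order all_algebra.
From mathcomp Require Import all_classical all_reals all_analysis.
From mathcomp Require Import ring lra.
Import Order.TTheory GRing.Theory Num.Theory.
Local Open Scope classical_set_scope.
Local Open Scope ring_scope.

Set Implicit Arguments. Unset Strict Implicit. Unset Printing Implicit Defensive.

Section Comb.
Variables (V : choiceType) (nb : V -> seq V) (R : realType).
Hypothesis sg : simple_graph nb.

Fixpoint walks (k : nat) (x : V) : seq (seq V) :=
  if k is k'.+1 then flatten (map (fun z => map (cons z) (walks k' z)) (nb x))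
  else [:: [::]].

Fixpoint nbw (x y : V) (s : seq V) : bool :=
  if s is z :: s' then (z != x) && nbw y z s' else true.

Fixpoint lastarc (x y : V) (s : seq V) : V * V :=
  if s is z :: s' then lastarc y z s' else (x, y).
Lemma mem_walks k x s : (s \in walks k x) = path (adj nb) x s && (size s == k).
Proof.
elim: k x s => [|k IH] x s.
  by case: s => //= z s; rewrite andbF.
rewrite [walks _ _]/=.
apply/idP/idP.
  move=> /flatten_mapP[z zin /mapP[s' s'in ->]] /=.
  rewrite IH in s'in; case/andP: s'in => ps /eqP <-.
  by rewrite ps eqxx !andbT.
case: s => [|z s] //= /andP[/andP[az ps] sz].
apply/flatten_mapP; exists z => //; apply/mapP; exists s => //.
by rewrite IH ps.
Qed.
Lemma adj_sym x y : adj nb x y = adj nb y x.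
Proof. by case: sg => _ [_ h]; rewrite /adj h. Qed.

Lemma hash_out x y z : adj nb x y -> z \in nb y ->
  hashimoto nb R (x, y) (y, z) = (z != x)%:R.
Proof.
move=> axy zy; rewrite /hashimoto /is_arc /= axy /adj zy eqxx /=.
by rewrite xpair_eqE eqxx.
Qed.

Lemma count_pow m x y b : adj nb x y ->
  (count (fun s => nbw x y s && (lastarc x y s == b)) (walks m y))%:R
  = hashimoto_pow nb R m (x, y) b.
Proof.
elim: m x y b => [|m IH] x y b axy.
  by rewrite /= /is_arc /= axy addn0.
rewrite [walks _ _]/= [hashimoto_pow _ _ _ _ _]/=.
rewrite count_flatten sumnE !big_map natr_sum.
apply: eq_big_seq => z zin.
rewrite count_map hash_out // -IH; last exact: zin.
rewrite /preim /=.
case: (z != x) => /=; first by rewrite mul1r.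
by rewrite mul0r (@eq_count _ _ pred0) ?count_pred0.
Qed.
Definition rv (a : V * V) : V * V := (a.2, a.1).
Definition outa (y : V) := [seq (y, z) | z <- nb y].
Definition ina (y : V) := [seq (w, y) | w <- nb y].

Lemma rvK : involutive rv. Proof. by case. Qed.
Lemma rv_inj : injective rv. Proof. exact: inv_inj rvK. Qed.

Lemma is_arc_rv a : is_arc nb (rv a) = is_arc nb a.
Proof. by case: a => x y; rewrite /is_arc /= adj_sym. Qed.

Lemma uniq_outa y : uniq (outa y).
Proof. rewrite map_inj_uniq; [by case: sg | by move=> ? ? []]. Qed.
Lemma uniq_ina y : uniq (ina y).
Proof. rewrite map_inj_uniq; [by case: sg | by move=> ? ? []]. Qed.

Lemma ina_rv y : ina y = map rv (outa y).
Proof. by rewrite /ina /outa -map_comp. Qed.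

Lemma hash_ge0 a c : 0 <= hashimoto nb R a c.
Proof. exact: ler0n. Qed.

Lemma pow_ge0 m a b : 0 <= hashimoto_pow nb R m a b.
Proof.
elim: m a => [|m IH] a /=; first exact: ler0n.
by apply: sumr_ge0 => c _; apply: mulr_ge0 => //; exact: hash_ge0.
Qed.

Lemma hash_rv a c : hashimoto nb R (rv c) (rv a) = hashimoto nb R a c.
Proof.
case: a c => [x y] [z w]; rewrite /hashimoto /=.
have e1 := is_arc_rv (x, y); have e2 := is_arc_rv (z, w); rewrite /= in e1 e2.
by rewrite e1 e2 [is_arc nb (z, w) && _]andbC [z == y]eq_sym /rv /= [(y, x) == _]eq_sym.
Qed.

Lemma pow_arc m a b : hashimoto_pow nb R m a b != 0 -> is_arc nb a.
Proof.
case: m => [|m] /=; first by case: (is_arc nb a) => //=; rewrite eqxx.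
apply: contraTT => na; rewrite negbK; apply/eqP/big1 => c _.
by rewrite /hashimoto (negbTE na) mul0r.
Qed.

Lemma hash_nz a c : hashimoto nb R a c != 0 ->
  [/\ is_arc nb a, is_arc nb c, a.2 = c.1 & c != rv a].
Proof.
move=> H.
have h : is_arc nb a && is_arc nb c && (a.2 == c.1) && (c != rv a).
  by move: H; rewrite /hashimoto; case: (_ && _) => //=; rewrite eqxx.
by case/andP: h => /andP[/andP[-> ->] /eqP ->] ->.
Qed.

Lemma hash_out_mem a c : hashimoto nb R a c != 0 -> c \in outa a.2.
Proof.
case/hash_nz => _ ac -> _; apply/mapP; exists c.2 => //.
by case: c ac.
Qed.

Lemma hash_in_mem a c : hashimoto nb R a c != 0 -> a \in ina c.1.
Proof.
case/hash_nz => aa _ <- _; apply/mapP; exists a.1; last by case: a aa.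
by move: aa; rewrite /is_arc adj_sym.
Qed.
Lemma sum_pick (l : seq (V * V)) (F : V * V -> R) b : uniq l ->
  (F b != 0 -> b \in l) -> \sum_(c <- l) (c == b)%:R * F c = F b.
Proof.
move=> ul hb.
have [bl|nbl] := boolP (b \in l).
  rewrite (bigD1_seq b) //= eqxx mul1r big1 ?addr0 // => c /negbTE ->.
  by rewrite mul0r.
rewrite big_seq big1 => [|c cl]; last first.
  have /negbTE -> : c != b by apply: contraNneq nbl => <-.
  by rewrite mul0r.
by apply/eqP; rewrite eq_sym; apply: (contraNT hb nbl).
Qed.
Notation H := (hashimoto nb R).
Notation pow := (hashimoto_pow nb R).

Lemma powS m a b : pow m.+1 a b = \sum_(c <- outa a.2) H a c * pow m c b.
Proof. by []. Qed.

Lemma pow1 a b : pow 1 a b = H a b.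
Proof.
rewrite /= -/(outa a.2) -[RHS](@sum_pick (outa a.2) (H a) b (uniq_outa _)); last first.
  exact: hash_out_mem.
apply: eq_bigr => c _; rewrite mulrC.
have [->|] := eqP; last by rewrite andbF.
rewrite andbT; case ac: (is_arc nb b); first by [].
have -> : H a b = 0 by apply/eqP; apply: contraFT ac; case/hash_nz => _ ->.
by rewrite !mulr0.
Qed.

Lemma pow_right m a b :
  pow m.+1 a b = \sum_(d <- ina b.1) pow m a d * H d b.
Proof.
elim: m a => [|m IH] a.
  rewrite pow1 /= -[LHS](@sum_pick (ina b.1) (H^~ b) a (uniq_ina _)); last first.
    by move=> /hash_in_mem.
  apply: eq_bigr => d _; rewrite eq_sym.
  have [->|] := eqP; last by rewrite andbF.
  rewrite andbT; case ac: (is_arc nb d); first by [].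
  have -> : H d b = 0 by apply/eqP; apply: contraFT ac; case/hash_nz => ->.
  by rewrite !mulr0.
rewrite powS.
under eq_bigr do rewrite IH mulr_sumr.
rewrite exchange_big /=; apply: eq_bigr => d _.
rewrite mulr_suml; apply: eq_bigr => c _; by rewrite mulrA.
Qed.
Lemma pow_sym m a b : pow m a b = pow m (rv b) (rv a).
Proof.
elim: m a b => [|m IH] a b.
  rewrite /= (inj_eq rv_inj) is_arc_rv eq_sym.
  by case: eqP => [->|]; rewrite ?andbF ?andbT.
rewrite powS pow_right /= ina_rv big_map; apply: eq_bigr => c _.
by rewrite IH hash_rv mulrC.
Qed.

Variable dmax : nat.
Hypothesis hdeg : forall x, (size (nb x) <= dmax)%N.

Lemma walks_size k x : (size (walks k x) <= dmax ^ k)%N.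
Proof.
elim: k x => [|k IH] x //=.
rewrite size_flatten /shape -map_comp sumnE big_map.
apply: (@leq_trans (\sum_(z <- nb x) dmax ^ k)).
  by apply: leq_sum => z _; rewrite /= size_map IH.
rewrite big_const_seq count_predT iter_addn_0 expnS mulnC leq_mul2r hdeg orbT.
by [].
Qed.

Lemma count_split (T : Type) (P : pred T) (f : T -> V * V) (L : seq T) s :
  uniq s -> (\sum_(b <- s) count (fun t => P t && (f t == b)) L <= count P L)%N.
Proof.
move=> us; elim: L => [|t L IH] /=; first by rewrite big1.
rewrite big_split /= leq_add //.
case: (P t) => /=; last by rewrite big1.
rewrite (eq_bigr (fun b => if f t == b then 1 else 0))%N => [|b _]; last by case: eqP.
rewrite -big_mkcond sum1_count (eq_count (a2 := pred1 (f t))) => [|b]; last by rewrite /= eq_sym.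
by rewrite count_uniq_mem // leq_b1.
Qed.

Lemma row_sum m a s : uniq s -> \sum_(b <- s) pow m a b <= dmax%:R ^+ m.
Proof.
move=> us; case ha: (is_arc nb a); last first.
  rewrite big1 ?exprn_ge0 ?ler0n // => b _; apply/eqP; apply: contraFT ha.
  exact: pow_arc.
case: a ha => x y ha.
under eq_bigr do rewrite -count_pow//.
rewrite -natr_sum -natrX ler_nat.
apply: leq_trans (count_split _ _ _ us) _.
apply: leq_trans (count_size _ _) _.
exact: walks_size.
Qed.

Lemma col_sum m b t : uniq t -> \sum_(a <- t) pow m a b <= dmax%:R ^+ m.
Proof.
move=> ut; under eq_bigr do rewrite pow_sym.
rewrite -(big_map rv predT (fun a' => pow m (rv b) a')).
by apply: row_sum; rewrite map_inj_uniq //; exact: rv_inj.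
Qed.
Lemma wcs (I : Type) (l : seq I) (w x : I -> R) : (forall i, 0 <= w i) ->
  (\sum_(i <- l) w i * x i) ^+ 2 <=
  (\sum_(i <- l) w i) * (\sum_(i <- l) w i * x i ^+ 2).
Proof.
move=> w0.
set A := \sum_(i <- l) w i; set B := \sum_(i <- l) w i * x i.
set C := \sum_(i <- l) w i * x i ^+ 2.
have E : \sum_(i <- l) \sum_(j <- l) w i * w j * (x i - x j) ^+ 2
    = (A * C - B ^+ 2) *+ 2.
  rewrite (eq_bigr (fun i => (w i * x i ^+ 2) * A + w i * C - (w i * x i) * B *+ 2)); last first.
    move=> i _.
    rewrite (eq_bigr (fun j => (w i * x i ^+ 2) * w j + w i * (w j * x j ^+ 2)
       - (w i * x i) * (w j * x j) *+ 2)) => [|j _]; last by ring.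
    by rewrite sumrB big_split /= sumrMnl -!mulr_sumr.
  rewrite sumrB big_split /= sumrMnl -!mulr_suml -/A -/B -/C; ring.
have : 0 <= \sum_(i <- l) \sum_(j <- l) w i * w j * (x i - x j) ^+ 2.
  apply: sumr_ge0 => i _; apply: sumr_ge0 => j _.
  by apply: mulr_ge0; [apply: mulr_ge0|exact: sqr_ge0].
by rewrite E pmulrn_lge0 // subr_ge0.
Qed.
Lemma schur m s t (f : V * V -> R) : uniq s -> uniq t ->
  \sum_(a <- t) (\sum_(b <- s) pow m a b * f b) ^+ 2
  <= (dmax%:R ^+ m) ^+ 2 * \sum_(b <- s) f b ^+ 2.
Proof.
move=> us ut; set D := dmax%:R ^+ m.
have D0 : 0 <= D by rewrite exprn_ge0 ?ler0n.
apply: (@le_trans _ _ (\sum_(a <- t) D * \sum_(b <- s) pow m a b * f b ^+ 2)).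
  apply: ler_sum => a _; apply: le_trans (@wcs _ s (pow m a) f (pow_ge0 m a)) _.
  apply: ler_wpM2r; last exact: row_sum.
  by apply: sumr_ge0 => b _; rewrite mulr_ge0 ?pow_ge0 ?sqr_ge0.
rewrite -mulr_sumr expr2 -mulrA ler_wpM2l //.
rewrite exchange_big /= mulr_sumr; apply: ler_sum => b _.
rewrite -mulr_suml ler_wpM2r ?sqr_ge0 //; exact: col_sum.
Qed.
Lemma l2sq_le (g : V * V -> R) B :
  (forall t, arc_seq nb t -> \sum_(a <- t) g a ^+ 2 <= B) -> l2sq nb g <= B.
Proof.
move=> h; apply: ge_sup; first by exists 0, [::] => //; rewrite big_nil.
by move=> _ [t ht <-]; exact: h.
Qed.

Lemma le_l2sq (g : V * V -> R) B t :
  (forall t, arc_seq nb t -> \sum_(a <- t) g a ^+ 2 <= B) -> arc_seq nb t ->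
  \sum_(a <- t) g a ^+ 2 <= l2sq nb g.
Proof.
move=> h ht; apply: sup_upper_bound; last by exists t.
split; first by exists 0, [::] => //; rewrite big_nil.
by exists B => _ [u hu <-]; exact: h.
Qed.

Lemma hpow_bound m s t (f : V * V -> R) : arc_seq nb s -> arc_seq nb t ->
  \sum_(a <- t) hpow_apply nb m s f a ^+ 2
  <= (dmax%:R ^+ m) ^+ 2 * \sum_(b <- s) f b ^+ 2.
Proof. by case/andP=> us _ /andP[ut _]; exact: schur. Qed.

Notation N := (hpow_norm nb R).

Lemma l2sq_hp_ge0 m s (f : V * V -> R) : arc_seq nb s -> 0 <= l2sq nb (hpow_apply nb m s f).
Proof.
move=> hs; have := @le_l2sq (hpow_apply nb m s f) _ [::] (fun t ht => hpow_bound m f hs ht).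
by rewrite big_nil; apply.
Qed.

Lemma l2sq_hp_le m s (f : V * V -> R) : arc_seq nb s -> \sum_(b <- s) f b ^+ 2 <= 1 ->
  Num.sqrt (l2sq nb (hpow_apply nb m s f)) <= dmax%:R ^+ m.
Proof.
move=> hs hf.
have D0 : 0 <= dmax%:R ^+ m :> R by rewrite exprn_ge0 ?ler0n.
rewrite -(ger0_norm D0) -sqrtr_sqr ler_sqrt ?sqr_ge0 //.
apply: l2sq_le => t ht; apply: le_trans (hpow_bound m f hs ht) _.
by rewrite -[X in _ <= X]mulr1 ler_wpM2l ?sqr_ge0.
Qed.

Lemma N_ub m r : [set r : R | exists (s : seq (V * V)) (f : V * V -> R),
         [/\ arc_seq nb s, \sum_(b <- s) f b ^+ 2 <= 1 &
             r = Num.sqrt (l2sq nb (hpow_apply nb m s f))]] r ->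
  r <= dmax%:R ^+ m.
Proof. by case=> s [f [hs hf ->]]; exact: l2sq_hp_le. Qed.

Lemma le_N m s (f : V * V -> R) : arc_seq nb s -> \sum_(b <- s) f b ^+ 2 <= 1 ->
  Num.sqrt (l2sq nb (hpow_apply nb m s f)) <= N m.
Proof.
move=> hs hf; apply: sup_upper_bound; last by exists s, f.
split; first by exists (Num.sqrt (l2sq nb (hpow_apply nb m s f))), s, f.
by exists (dmax%:R ^+ m); exact: N_ub.
Qed.

Lemma N_ge0 m : 0 <= N m.
Proof.
apply: le_trans (sqrtr_ge0 _) (le_N m (f := fun _ => 0) (s := [::]) _ _) => //.
by rewrite big_nil.
Qed.

Lemma N_le m : N m <= dmax%:R ^+ m.
Proof.
apply: ge_sup; last by move=> r; exact: N_ub.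
exists (Num.sqrt (l2sq nb (hpow_apply nb m [::] (fun _ => 0 : R)))), [::], (fun _ => 0 : R).
by rewrite big_nil.
Qed.
Lemma N_key m s t (h : V * V -> R) : arc_seq nb s -> arc_seq nb t ->
  \sum_(a <- t) hpow_apply nb m s h a ^+ 2 <= N m ^+ 2 * \sum_(b <- s) h b ^+ 2.
Proof.
move=> hs ht; set L2 := \sum_(b <- s) h b ^+ 2; set N2 := N m ^+ 2.
have L0 : 0 <= L2 by apply: sumr_ge0 => b _; exact: sqr_ge0.
have N20 : 0 <= N2 by rewrite exprn_ge0 ?N_ge0.
apply/ler_addgt0Pr => e e0.
set e' := e / (N2 + 1).
have e'0 : 0 < e' by rewrite divr_gt0 // ltr_wpDl.
have h1 : e' * N2 <= e.
  rewrite /e' mulrAC ler_pdivrMr ?ltr_wpDl //; nra.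
set k := L2 + e'.
have k0 : 0 < k by rewrite ltr_wpDl.
set sk := Num.sqrt k.
have sk0 : 0 < sk by rewrite sqrtr_gt0.
pose f b := h b / sk.
have hf : \sum_(b <- s) f b ^+ 2 <= 1.
  rewrite /f; under eq_bigr do rewrite expr_div_n sqr_sqrtr ?(ltW k0) //.
  by rewrite -mulr_suml ler_pdivrMr // mul1r lerDl ltW.
have E a : hpow_apply nb m s h a = sk * hpow_apply nb m s f a.
  rewrite /hpow_apply mulr_sumr; apply: eq_bigr => b _; rewrite /f.
  by field; exact: lt0r_neq0.
have -> : \sum_(a <- t) hpow_apply nb m s h a ^+ 2
    = k * \sum_(a <- t) hpow_apply nb m s f a ^+ 2.
  rewrite mulr_sumr; apply: eq_bigr => a _.
  by rewrite E exprMn sqr_sqrtr // ltW.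
have y0 := l2sq_hp_ge0 m f hs.
have h2 : l2sq nb (hpow_apply nb m s f) <= N2.
  rewrite -(sqr_sqrtr y0) /N2; apply: lerXn2r; rewrite ?nnegrE ?sqrtr_ge0 ?N_ge0 //.
  exact: le_N.
have h3 : \sum_(a <- t) hpow_apply nb m s f a ^+ 2 <= N2.
  apply: le_trans h2.
  exact: (le_l2sq (fun t ht => hpow_bound m f hs ht)).
have h4 : 0 <= \sum_(a <- t) hpow_apply nb m s f a ^+ 2.
  by apply: sumr_ge0 => a _; exact: sqr_ge0.
rewrite /k; nra.
Qed.
Fixpoint fwd (n : nat) (a : V * V) : seq (V * V) :=
  if n is n'.+1 then flatten [seq fwd n' c | c <- outa a.2] else [:: a].

Lemma fwd_mem n a b : pow n a b != 0 -> b \in fwd n a.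
Proof.
elim: n a => [|n IH] a /=.
  move=> h; have : is_arc nb a && (a == b).
    by move: h; case: (_ && _) => //=; rewrite eqxx.
  by case/andP => _ /eqP ->; rewrite mem_seq1.
move=> h; have : has (fun c => pow n c b != 0) (outa a.2).
  apply: contraNT h => /hasPn hn.
  apply/eqP; rewrite big_seq big1 // => c /hn; rewrite negbK => /eqP ->.
  by rewrite mulr0.
case/hasP => c cin hc; apply/flatten_mapP; exists c => //; exact: IH.
Qed.

Definition supp n s :=
  undup [seq c <- flatten [seq map rv (fwd n (rv b)) | b <- s] | is_arc nb c].

Lemma supp_mem n s b c : b \in s -> pow n c b != 0 -> c \in supp n s.
Proof.
move=> bs h; rewrite mem_undup mem_filter (pow_arc h) /=.
apply/flatten_mapP; exists b => //; apply/mapP; exists (rv c); last by rewrite rvK.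
by apply: fwd_mem; rewrite -pow_sym.
Qed.

Lemma supp_arc n s : arc_seq nb (supp n s).
Proof. by rewrite /arc_seq undup_uniq /= all_undup filter_all. Qed.

Lemma pow_comp m n a b (sp : seq (V * V)) : uniq sp ->
  (forall c, pow n c b != 0 -> c \in sp) ->
  pow (m + n) a b = \sum_(c <- sp) pow m a c * pow n c b.
Proof.
move=> usp hsp; elim: m a => [|m IH] a.
  rewrite add0n /=; case ha: (is_arc nb a) => /=; last first.
    rewrite big1 => [|c _]; last by rewrite mul0r.
    by apply/eqP; apply: contraFT ha => /pow_arc.
  under eq_bigr do rewrite eq_sym.
  by rewrite (@sum_pick sp (pow n ^~ b) a usp (@hsp a)).
rewrite addSn powS.
under eq_bigr do rewrite IH mulr_sumr.
rewrite exchange_big /=; apply: eq_bigr => d _.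
rewrite mulr_suml; apply: eq_bigr => c _; by rewrite mulrA.
Qed.

Lemma hpow_comp m n s (f : V * V -> R) a : arc_seq nb s ->
  hpow_apply nb (m + n) s f a
  = hpow_apply nb m (supp n s) (hpow_apply nb n s f) a.
Proof.
case/andP => us _; rewrite /hpow_apply.
rewrite big_seq (eq_bigr (fun b => \sum_(c <- supp n s) pow m a c * pow n c b * f b)); last first.
  move=> b bs; rewrite (@pow_comp m n a b (supp n s)) ?mulr_suml //.
    by case/andP: (supp_arc n s).
  by move=> c; exact: supp_mem.
rewrite -big_seq exchange_big /=; apply: eq_bigr => c _.
by rewrite mulr_sumr; apply: eq_bigr => b _; rewrite mulrA.
Qed.

Lemma N_sub m n : N (m + n) <= N m * N n.
Proof.
have M0 := N_ge0 m; have N0 := N_ge0 n.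
apply: ge_sup.
  exists (Num.sqrt (l2sq nb (hpow_apply nb (m + n) [::] (fun _ => 0 : R)))), [::], (fun _ => 0 : R).
  by rewrite big_nil.
move=> _ [s [f [hs hf ->]]].
rewrite -(ger0_norm (mulr_ge0 M0 N0)) -sqrtr_sqr ler_sqrt ?sqr_ge0 //.
apply: l2sq_le => t ht.
under eq_bigr do rewrite hpow_comp //.
apply: le_trans (N_key m _ (supp_arc n s) ht) _.
rewrite exprMn ler_wpM2l ?exprn_ge0 //.
apply: le_trans (N_key n f hs (supp_arc n s)) _.
by rewrite -[X in _ <= X]mulr1 ler_wpM2l ?exprn_ge0.
Qed.
Lemma sum1_size (T : Type) (t : seq T) : \sum_(i <- t) (1 : R) = (size t)%:R.
Proof. by elim: t => [|x t IH]; rewrite ?big_nil ?big_cons ?IH //= nat1r. Qed.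

Lemma outa_arc v : arc_seq nb (outa v).
Proof.
rewrite /arc_seq uniq_outa /=; apply/allP => _ /mapP[z zin ->].
exact: zin.
Qed.

Lemma ina_arc u : arc_seq nb (ina u).
Proof.
rewrite /arc_seq uniq_ina /=; apply/allP => _ /mapP[w win ->].
by rewrite /is_arc /= adj_sym; exact: win.
Qed.

Lemma cnt_bound k v u :
  \sum_(z <- nb v) \sum_(w <- nb u) pow k (v, z) (w, u) <= dmax%:R * N k.
Proof.
pose g := hpow_apply nb k (ina u) (fun _ => 1 : R).
have E : \sum_(z <- nb v) \sum_(w <- nb u) pow k (v, z) (w, u)
    = \sum_(a <- outa v) g a.
  rewrite big_map; apply: eq_bigr => z _.
  by rewrite /g /hpow_apply big_map; apply: eq_bigr => w _; rewrite mulr1.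
have g0 : 0 <= \sum_(a <- outa v) g a.
  by apply: sumr_ge0 => a _; apply: sumr_ge0 => b _; rewrite mulr1 pow_ge0.
have D0 : 0 <= dmax%:R * N k :> R by rewrite mulr_ge0 ?ler0n ?N_ge0.
rewrite E -(ler_pXn2r (n := 2)) ?nnegrE //.
have := @wcs _ (outa v) (fun _ => 1) g (fun _ => ler01).
under eq_bigr do rewrite mul1r.
rewrite sum1_size => h; apply: le_trans h _.
have h2 := N_key k (fun _ => 1 : R) (ina_arc u) (outa_arc v).
under eq_bigr do rewrite mul1r.
rewrite -/g in h2.
have e1 : \sum_(b <- ina u) (1 : R) ^+ 2 = (size (ina u))%:R.
  by rewrite -sum1_size; apply: eq_bigr => b _; rewrite expr1n.
rewrite e1 in h2.
have sv : (size (outa v))%:R <= dmax%:R :> R by rewrite ler_nat size_map hdeg.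
have su : (size (ina u))%:R <= dmax%:R :> R by rewrite ler_nat size_map hdeg.
have N0 := N_ge0 k.
have h3 : 0 <= \sum_(a <- outa v) g a ^+ 2 by apply: sumr_ge0 => a _; exact: sqr_ge0.
apply: le_trans (ler_wpM2l (ler0n _ _) h2) _.
have s0 : 0 <= (size (ina u))%:R :> R by exact: ler0n.
have s1 : 0 <= (size (outa v))%:R :> R by exact: ler0n.
have hp := ler_pM s1 s0 sv su.
have n0 : 0 <= N k ^+ 2 by exact: sqr_ge0.
rewrite exprMn; nra.
Qed.
Lemma lastarc_prop x y s : path (adj nb) x (y :: s) ->
  adj nb (lastarc x y s).1 (lastarc x y s).2 /\ (lastarc x y s).2 = last y s.
Proof.
elim: s x y => [|z s IH] x y /=; first by rewrite andbT.
by case/andP => _ h; exact: IH.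
Qed.

Lemma uniq_nbw x y s : uniq (x :: y :: s) -> nbw x y s.
Proof.
elim: s x y => [|z s IH] x y // /andP[hx hu].
rewrite /= IH ?andbT //.
by apply: contraNneq hx => ->; rewrite !inE eqxx orbT.
Qed.

Lemma saw_count k v u :
  (count (fun s => (last v s == u) && uniq (v :: s)) (walks k.+1 v))%:R
  <= \sum_(z <- nb v) \sum_(w <- nb u) pow k (v, z) (w, u).
Proof.
rewrite [walks _ _]/= count_flatten sumnE !big_map natr_sum big_seq.
rewrite [X in _ <= X]big_seq; apply: ler_sum => z zv.
rewrite count_map.
have avz : adj nb v z by exact: zv.
under eq_bigr do rewrite -count_pow //.
rewrite -natr_sum ler_nat.
have hL : all (path (adj nb) z) (walks k z).
  by apply/allP => s; rewrite mem_walks => /andP[].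
elim: (walks k z) hL => [|s L IH] /=; first by rewrite big1.
move=> /andP[ps hL]; rewrite big_split /= leq_add ?IH //.
rewrite /preim /=.
case/boolP: ((last z s == u) && uniq [:: v, z & s]) => [/andP[/eqP lu us]|] //.
have hp : path (adj nb) v (z :: s) by rewrite /= avz ps.
have [ha hl] := lastarc_prop hp.
rewrite (uniq_nbw us) /=.
set p := lastarc v z s in ha hl *.
have pu : p = (p.1, u) by rewrite -lu -hl; case: p {ha hl}.
have p1u : p.1 \in nb u by move: ha; rewrite -/(adj nb u p.1) pu /= adj_sym.
have un : uniq (nb u) by case: sg.
rewrite (bigD1_seq p.1) //= -pu eqxx /=.
exact: leq_addr.
Qed.
Lemma bernoulli_le (d : R) m : 0 <= d -> 1 + m%:R * d <= (1 + d) ^+ m.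
Proof.
move=> d0; elim: m => [|m IH]; first by rewrite mul0r addr0 expr0.
rewrite exprS -natr1 mulrDl mul1r.
have h1 : 1 <= 1 + d by rewrite lerDl.
have : (1 + d) * (1 + m%:R * d) <= (1 + d) * (1 + d) ^+ m.
  by rewrite ler_wpM2l // (le_trans ler01 h1).
have : 0 <= m%:R * d * d by rewrite !mulr_ge0 ?ler0n.
nra.
Qed.

Section Fek.
Variable a : nat -> R.
Hypothesis a0 : forall m, 0 <= a m.
Hypothesis asub : forall m n, a (m + n) <= a m * a n.

Lemma a_mul q k r y : 0 <= y -> a k <= y ^+ k -> a (q * k + r) <= y ^+ (q * k) * a r.
Proof.
move=> y0 hk; elim: q => [|q IH]; first by rewrite mul0n add0n expr0 mul1r.
rewrite mulSn -addnA exprD -mulrA.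
apply: le_trans (asub _ _) _.
by apply: ler_pM => //; rewrite exprn_ge0.
Qed.

Lemma bnd_of y k : 0 < y -> (0 < k)%N -> a k <= y ^+ k ->
  exists M, 0 < M /\ forall m, a m <= M * y ^+ m.
Proof.
move=> y0 k0 hk.
have S0 : 0 <= \sum_(r < k) a r / y ^+ r.
  by apply: sumr_ge0 => r _; rewrite divr_ge0 ?a0 ?exprn_ge0 ?ltW.
set S := \sum_(r < k) a r / y ^+ r.
exists (S + 1); split; first by rewrite (lt_le_trans ltr01) // lerDr.
move=> m; have Em := divn_eq m k.
apply: (@le_trans _ _ (y ^+ (m %/ k * k) * a (m %% k))).
  by rewrite {1}Em; exact: a_mul (ltW y0) hk.
have rk : (m %% k < k)%N by rewrite ltn_pmod.
have yr : 0 < y ^+ (m %% k) by rewrite exprn_gt0.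
have -> : y ^+ m = y ^+ (m %/ k * k) * y ^+ (m %% k) by rewrite -exprD -Em.
have -> : y ^+ (m %/ k * k) * a (m %% k)
    = (a (m %% k) / y ^+ (m %% k)) * (y ^+ (m %/ k * k) * y ^+ (m %% k)).
  by rewrite mulrA mulrAC divfK ?lt0r_neq0 // mulrC.
rewrite ler_wpM2r ?mulr_ge0 ?exprn_ge0 ?ltW //.
apply: (@le_lt_trans _ _ S); last by rewrite ltrDl ltr01.
rewrite /S (bigD1 (Ordinal rk)) //= lerDl.
by apply: sumr_ge0 => r _; rewrite divr_ge0 ?a0 ?exprn_ge0 ?ltW.
Qed.
Let x m := a m `^ (m%:R)^-1.

Lemma x_ge0 m : 0 <= x m. Proof. exact: powR_ge0. Qed.

Lemma x_pow m : (0 < m)%N -> x m ^+ m = a m.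
Proof.
move=> m0; rewrite /x -powR_mulrn ?powR_ge0 // -powRrM mulVf ?powRr1 //.
by rewrite pnatr_eq0 -lt0n.
Qed.

Lemma le_x m z : (0 < m)%N -> 0 <= z -> a m <= z ^+ m -> x m <= z.
Proof.
move=> m0 z0 h.
have -> : z = (z ^+ m) `^ (m%:R)^-1.
  rewrite -powR_mulrn // -powRrM mulfV ?powRr1 //.
  by rewrite pnatr_eq0 -lt0n.
apply: ge0_ler_powR => //; rewrite ?invr_ge0 ?ler0n ?nnegrE ?a0 ?exprn_ge0 //.
Qed.
Let Xs := [set x m | m in [set m | (0 < m)%N]].
Let L := inf Xs.

Lemma Xs_n0 : Xs !=set0.
Proof. by exists (x 1), 1%N. Qed.

Lemma Xs_lb : has_lbound Xs.
Proof. by exists 0 => _ [m _ <-]; exact: x_ge0. Qed.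

Lemma L_ge0 : 0 <= L.
Proof. by apply: lb_le_inf Xs_n0 _ => _ [m _ <-]; exact: x_ge0. Qed.

Lemma L_le m : (0 < m)%N -> L <= x m.
Proof. by move=> m0; apply: ge_inf Xs_lb _ _; exists m. Qed.

Lemma adh y : L < y -> exists k, (0 < k)%N /\ x k < y.
Proof.
move=> Ly; have e0 : 0 < y - L by rewrite subr_gt0.
have [_ [k k0 <-] h] := @inf_adherent _ Xs (y - L) e0 (conj Xs_n0 Xs_lb).
by exists k; split => //; move: h; rewrite addrC subrK.
Qed.

Lemma bnd y : L < y -> exists M, 0 < M /\ forall m, a m <= M * y ^+ m.
Proof.
move=> Ly; have y0 : 0 < y by apply: le_lt_trans L_ge0 Ly.
have [k [k0 hk]] := adh Ly.
apply: (bnd_of y0 k0); rewrite -x_pow //.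
by apply: lerXn2r; rewrite ?nnegrE ?x_ge0 ?ltW.
Qed.

Lemma x_cvg : x @ \oo --> L.
Proof.
apply/cvgrPdist_le => e e0.
set y := L + e / 2.
have Ly : L < y by rewrite /y ltrDl divr_gt0.
have y0 : 0 < y by apply: le_lt_trans L_ge0 Ly.
have [M [M0 hM]] := bnd Ly.
set d := e / 2 / y.
have d0 : 0 < d by rewrite /d !divr_gt0.
have yd : y * (1 + d) = L + e.
  rewrite mulrDr mulr1 /d mulrCA mulfV ?lt0r_neq0 // mulr1 /y -addrA -splitr.
  by [].
set N0 := (Num.trunc (M / d)).+1.
have hMd : M < N0%:R * d by rewrite -ltr_pdivrMr // truncnS_gt.
apply: filterS (nbhs_infty_ge N0) => m hm.
have m0 : (0 < m)%N by apply: leq_trans hm.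
have hx := L_le m0.
rewrite distrC ger0_norm ?subr_ge0 //.
suff : x m <= L + e by lra.
apply: le_x m0 _ _; first by rewrite addr_ge0 ?L_ge0 ?ltW.
rewrite -yd exprMn; apply: le_trans (hM m) _.
rewrite mulrC ler_wpM2l ?exprn_ge0 ?ltW //.
apply: lt_le_trans (bernoulli_le m (ltW d0)).
have : N0%:R <= m%:R :> R by rewrite ler_nat.
nra.
Qed.
Lemma lim_x : limn (fun m => a m `^ (m%:R)^-1) = L.
Proof. by apply: cvg_lim => //; exact: x_cvg. Qed.

Lemma fekete_bound y : limn (fun m => a m `^ (m%:R)^-1) < y ->
  exists M, 0 < M /\ forall m, a m <= M * y ^+ m.
Proof. by rewrite lim_x; exact: bnd. Qed.

Lemma lim_x_ge0 : 0 <= limn (fun m => a m `^ (m%:R)^-1).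
Proof. by rewrite lim_x; exact: L_ge0. Qed.
End Fek.
Lemma N_bound y : hashimoto_rho nb R < y ->
  exists M, 0 < M /\ forall m, N m <= M * y ^+ m.
Proof. exact: (fekete_bound N_ge0 N_sub). Qed.

Lemma rho_ge0 : 0 <= hashimoto_rho nb R.
Proof. exact: (lim_x_ge0 N_ge0 N_sub). Qed.

Lemma saw_bound k v u :
  (count (fun s => (last v s == u) && uniq (v :: s)) (walks k.+1 v))%:R
  <= dmax%:R * N k :> R.
Proof. exact: le_trans (saw_count k v u) (cnt_bound k v u). Qed.
End Comb.
Section Prob.
Local Open Scope ereal_scope.
Variables (V : choiceType) (nb : V -> seq V) (R : realType) (d : measure_display)
  (Omega : measurableType d) (P : probability Omega R) (omega : V -> Omega -> bool)
  (p : R).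
Hypothesis hperc : site_percolation P omega p.

Definition openE (s : seq V) : set Omega := [set w | all (fun x => omega x w) s].

Lemma openE_meas s : measurable (openE s).
Proof.
elim: s => [|x s IH].
  by rewrite (_ : openE [::] = setT) //; apply/seteqP; split.
rewrite (_ : openE (x :: s) = [set w | omega x w] `&` openE s).
  by apply: measurableI => //; case: hperc.
by apply/seteqP; split => w /= /andP.
Qed.

Definition hasE v (c : pred (seq V)) (L : seq (seq V)) : set Omega :=
  [set w | has (fun s => c s && all (fun x => omega x w) (v :: s)) L].

Lemma hasE_cons v c s L :
  hasE v c (s :: L) = (if c s then openE (v :: s) else set0) `|` hasE v c L.
Proof.
apply/seteqP; split => w; rewrite /hasE /openE /=.
  case: (c s) => /=; last by move=> h; right.
  by move=> /orP[h|h]; [left|right].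
case: (c s) => /=; first by move=> [h|h]; rewrite h ?orbT.
by move=> [//|->].
Qed.

Lemma hasE_meas v c L : measurable (hasE v c L).
Proof.
elim: L => [|s L IH].
  by rewrite (_ : hasE v c [::] = set0) //; apply/seteqP; split.
by rewrite hasE_cons; apply: measurableU => //; case: (c s) => //; exact: openE_meas.
Qed.

Lemma hasE_le v c L : P (hasE v c L) <= \sum_(s <- L | c s) P (openE (v :: s)).
Proof.
elim: L => [|s L IH].
  by rewrite (_ : hasE v c [::] = set0) ?measure0 ?big_nil //; apply/seteqP; split.
rewrite hasE_cons big_cons.
apply: le_trans (measureU2 _ _ _) _.
- by case: (c s) => //; exact: openE_meas.
- exact: hasE_meas.
case: (c s); first by rewrite leeD2l.
by rewrite measure0 add0e.
Qed.
Lemma prod_const (s : seq V) (r : R) : (\prod_(x <- s) r = r ^+ size s)%R.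
Proof. by elim: s => [|x s IH]; rewrite ?big_nil ?big_cons ?IH ?exprS. Qed.

Lemma P_openE s : uniq s -> P (openE s) = (p ^+ size s)%:E.
Proof.
move=> us; case: hperc => _ /(_ s (fun _ => true) us).
rewrite prod_const => <-; congr (P _).
apply/seteqP; split => w; rewrite /openE /=.
  by move=> h; apply/allP => x /(allP h) ->.
by move=> h; apply/allP => x /(allP h) /eqP.
Qed.

Lemma sum_const_cnt (L : seq (seq V)) (c : pred (seq V)) (r : R) :
  \sum_(s <- L | c s) r%:E = ((count c L)%:R * r)%:E.
Proof.
elim: L => [|s L IH]; first by rewrite big_nil mul0r.
rewrite big_cons IH /=; case: (c s) => /=; last by rewrite add0n.
by rewrite -EFinD natrD mulrDl mul1r.
Qed.
Lemma cluster_meas u v : measurable (in_cluster nb omega u v).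
Proof.
have -> : in_cluster nb omega u v
    = \bigcup_k hasE v (fun s => last v s == u) (walks nb k v).
  apply/seteqP; split => w /=.
    case=> s [[ps ls] al]; exists (size s) => //; rewrite /hasE /=.
    apply/hasP; exists s; first by rewrite mem_walks ps eqxx.
    by rewrite ls eqxx.
  case=> k _ /hasP[s sin /andP[/eqP ls al]]; exists s; split => //; split => //.
  by move: sin; rewrite mem_walks => /andP[].
by apply: bigcup_measurable => k _; exact: hasE_meas.
Qed.

Lemma cluster_sub u v : in_cluster nb omega u v `<=`
  \bigcup_k hasE v (fun s => (last v s == u) && uniq (v :: s)) (walks nb k v).
Proof.
move=> w [s [[ps ls] al]]; move: ls.
case: (shortenP ps) => s' ps' us' sub ls'.
exists (size s') => //; rewrite /hasE /=.
apply/hasP; exists s'; first by rewrite mem_walks ps' eqxx.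
move: us' => /= /andP[-> ->]; rewrite ls' eqxx /=.
move: al => /= /andP[-> al]; apply/allP => x /sub xs; exact: (allP al).
Qed.

Lemma PE_le k u v :
  P (hasE v (fun s => (last v s == u) && uniq (v :: s)) (walks nb k v))
  <= ((count (fun s => (last v s == u) && uniq (v :: s)) (walks nb k v))%:R
      * p ^+ k.+1)%:E.
Proof.
apply: le_trans (hasE_le _ _ _) _.
rewrite big_seq_cond (eq_bigr (fun _ => (p ^+ k.+1)%:E)).
  by rewrite -big_seq_cond sum_const_cnt.
move=> s /andP[sin /andP[_ us]]; rewrite P_openE //=.
by move: sin; rewrite mem_walks => /andP[_ /eqP ->].
Qed.
End Prob.
Section Geo.
Variable R : realType.
Lemma geom_id (r : R) n N0 :
  (\sum_(0 <= k < N0) (if (n <= k)%N then r ^+ k else 0)) * (1 - r)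
  = if (n <= N0)%N then r ^+ n - r ^+ N0 else 0.
Proof.
elim: N0 => [|N0 IH].
  by rewrite big_mkord big_ord0 mul0r; case: n => [|n] //=; rewrite subrr.
rewrite big_nat_recr //= mulrDl IH.
case: (leqP n N0) => h.
  have h' : (n <= N0.+1)%N by rewrite (leq_trans h).
  case: ifP => h''; last by rewrite h' in h''.
  by rewrite exprS; ring.
rewrite mul0r addr0; case: ifP => // h2.
have -> : n = N0.+1 by apply/eqP; rewrite eqn_leq h2 h.
by rewrite subrr.
Qed.

Lemma geom_le (r : R) n N0 : 0 <= r < 1 ->
  \sum_(0 <= k < N0) (if (n <= k)%N then r ^+ k else 0) <= r ^+ n / (1 - r).
Proof.
case/andP => r0 r1; rewrite ler_pdivlMr ?subr_gt0 // geom_id.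
case: ifP => _; last by rewrite exprn_ge0.
by rewrite lerBlDr lerDl exprn_ge0.
Qed.
Lemma eseries_le (T : nat -> R) (B : R) : (forall k, 0 <= T k) ->
  (forall N0, \sum_(0 <= k < N0) T k <= B) ->
  (\sum_(k <oo) (T k)%:E <= B%:E)%E.
Proof.
move=> T0 hB; apply: lime_le.
  by apply: is_cvg_nneseries => n _ _; rewrite lee_fin.
by apply: nearW => N0; rewrite sumEFin lee_fin.
Qed.
End Geo.
Lemma walk_rev (V : choiceType) (nb : V -> seq V) u v s : simple_graph nb -> walk nb v u s ->
  walk nb u v (rev (belast v s)).
Proof.
move=> sg [ps ls]; split.
  rewrite -ls rev_path; apply: sub_path ps => x y.
  by rewrite /adj; case: sg => _ [_ ->].
case: s ps ls => [|z s] /= ps ls; first by rewrite ls.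
by rewrite rev_cons last_rcons.
Qed.

Unset Implicit Arguments. Set Strict Implicit.

Theorem theorem2 (V : choiceType) (nb : V -> seq V) (dmax : nat)
  (R : realType) (d : measure_display) (Omega : measurableType d)
  (P : probability Omega R) (omega : V -> Omega -> bool) (p : R) :
  simple_graph nb -> infinite_graph V -> connected_graph nb ->
  max_degree nb dmax ->
  0 <= p <= 1 -> site_percolation P omega p ->
  p * hashimoto_rho nb R < 1 ->
  exists rho' C : R,
    [/\ 0 <= rho' < 1,
        dmax%:R / (1 - p * hashimoto_rho nb R) <= C &
        forall (u v : V) (n : nat), is_dist nb u v n ->
          (P (in_cluster nb omega u v) <= (C * rho' ^+ n)%:E)%E].
Proof.
move=> sg _ _ [hdeg _] /andP[p0 p1] hperc hpr.
set rho := hashimoto_rho nb R in hpr *.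
have rho0 : 0 <= rho := @rho_ge0 V nb R sg dmax hdeg.
set q := (1 - p * rho) / (p + 1).
have p10 : 0 < p + 1 by lra.
have q0 : 0 < q by rewrite divr_gt0 // subr_gt0.
have hq : q * (p + 1) = 1 - p * rho by rewrite divfK // lt0r_neq0.
set y := rho + q.
have Ly : rho < y by rewrite ltrDl.
have py : p * y < 1 by rewrite /y mulrDr; nra.
have y0 : 0 < y by lra.
have [M [M0 hM]] := @N_bound V nb R sg dmax hdeg y Ly.
set r' := Num.max (p * y) (2^-1).
have r'half : 2^-1 <= r' by rewrite le_max lexx orbT.
have r'0 : 0 < r' by apply: lt_le_trans r'half; rewrite invr_gt0.
have r'1 : r' < 1 by rewrite gt_max py /= invf_lt1 ?ltr1n.
have py0 : 0 <= p * y by rewrite mulr_ge0 // ltW.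
have pyr : p * y <= r' by rewrite le_max lexx.
set A := dmax%:R * M * 2.
have A0 : 0 <= A by rewrite !mulr_ge0 ?ler0n ?ltW.
set C := Num.max (dmax%:R / (1 - p * rho)) (Num.max 1 (A / (1 - r'))).
exists r', C; split.
- by rewrite (ltW r'0) r'1.
- by rewrite le_max lexx.
move=> u v n hd.
have Pm := cluster_meas nb hperc u v.
case: n hd => [|n] hd.
  rewrite expr0 mulr1; apply: le_trans (probability_le1 P Pm) _.
  by rewrite lee_fin !le_max lexx /= orbT.
pose E k := hasE omega v (fun s => (last v s == u) && uniq (v :: s)) (walks nb k v).
have Em k : d.-measurable (E k) by exact: (hasE_meas hperc).
have hsub : in_cluster nb omega u v `<=` \bigcup_k E k by exact: cluster_sub.
have hs := measure_sigma_subadditive P Em Pm hsub.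
apply: le_trans hs _.
pose T k := if (n.+1 <= k)%N then A * r' ^+ k else 0.
have T0 k : 0 <= T k.
  rewrite /T; case: ifP => _ //.
  by apply: mulr_ge0 => //; apply: exprn_ge0; exact: ltW.
apply: (@le_trans _ _ (\sum_(k <oo) (T k)%:E)%E).
  apply: lee_nneseries; first by move=> k _ _; exact: measure_ge0.
  move=> k _.
  apply: le_trans (PE_le nb hperc k u v) _; rewrite lee_fin /T.
  case: ltnP => hk; last first.
    have -> : count (fun s => (last v s == u) && uniq (v :: s)) (walks nb k v) = 0%N.
      apply/eqP; rewrite -leqn0 leqNgt -has_count; apply/hasPn => s sin.
      apply/negP => /andP[/eqP ls _].
      move: sin; rewrite mem_walks => /andP[ps /eqP sk].
      have := hd.2 _ (walk_rev sg (conj ps ls)); rewrite size_rev size_belast sk.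
      by rewrite leqNgt ltnS hk.
    by rewrite mul0r.
  case: k hk => [//|k] hk.
  have c1 := @saw_bound V nb R sg dmax hdeg k v u.
  have c2 := hM k.
  have key : p ^+ k.+2 * y ^+ k <= r' ^+ k.
    have -> : p ^+ k.+2 * y ^+ k = (p * p) * (p * y) ^+ k.
      by rewrite exprMn !exprS; ring.
    apply: (@le_trans _ _ ((p * y) ^+ k)).
      apply: ler_piMl; first exact: exprn_ge0.
      by rewrite mulr_ile1.
    by apply: lerXn2r; rewrite ?nnegrE // (le_trans py0).
  apply: (@le_trans _ _ (dmax%:R * (M * y ^+ k) * p ^+ k.+2)).
    apply: ler_wpM2r; first exact: exprn_ge0.
    apply: le_trans c1 _; apply: ler_wpM2l; [exact: ler0n | exact: c2].
  have -> : dmax%:R * (M * y ^+ k) * p ^+ k.+2 = dmax%:R * M * (p ^+ k.+2 * y ^+ k).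
    by rewrite [p ^+ _ * _]mulrC !mulrA.
  apply: (@le_trans _ _ (dmax%:R * M * r' ^+ k)).
    by apply: ler_wpM2l; [rewrite mulr_ge0 ?ler0n ?ltW | exact: key].
  have -> : A * r' ^+ k.+1 = (dmax%:R * M * r' ^+ k) * (2 * r').
    by rewrite /A exprS; ring.
  apply: ler_peMr; first by rewrite !mulr_ge0 ?ler0n ?exprn_ge0 ?ltW.
  lra.
apply: le_trans (@eseries_le _ T (A * r' ^+ n.+1 / (1 - r')) T0 _) _.
  move=> N0.
  have -> : \sum_(0 <= k < N0) T k
      = A * \sum_(0 <= k < N0) (if (n.+1 <= k)%N then r' ^+ k else 0).
    by rewrite mulr_sumr; apply: eq_bigr => k _; rewrite /T; case: ifP; rewrite ?mulr0.
  rewrite -mulrA ler_wpM2l //; apply: geom_le.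
  by rewrite (ltW r'0) r'1.
rewrite lee_fin mulrAC; apply: ler_wpM2r; first by rewrite exprn_ge0 ?ltW.
by rewrite !le_max lexx !orbT.
Qed.
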